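(* Let $\mathcal H$ be a finite-dimensional Hilbert space, $L\in\mathbb N$, and $P_1,\dots,P_L$ orthogonal projections on $\mathcal H$ such that $[P_i,P_j]\ne0$ implies $|i-j|=1$ or $\{i,j\}=\{1,L\}$. Fix $1<n<L$, identify indices cyclically ($i\equiv i+L$), and set $H_L=\sum_{i=1}^LP_i$ and $H_{n,k}=\sum_{i=k}^{n+k-1}P_i$ for $k=1,\dots,L$. Assume $\ker H_L\ne\{0\}$. Then $$\operatorname{gap}(H_L)\ge\frac{n}{n-1}\Big(\min_{1\le k\le L}\operatorname{gap}(H_{n,k})-\frac1n\Big).$$
   Context: For a nonnegative self-adjoint operator $H$ on a finite-dimensional Hilbert space with nontrivial kernel, $\operatorname{gap}(H)=\inf\{\langle\psi,H\psi\rangle:\psi\in(\ker H)^\perp,\|\psi\|=1\}$. *)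

(* Defs.v *)
(* Hilbert space: C^d with C := R[i] (complex numbers over R : realType),
   vectors are column vectors 'cV[R[i]]_d, inner product <u,v> = (u^t* *m v) 0 0. *)
From HB Require Import structures.
From mathcomp Require Import all_boot all_order all_algebra.
From mathcomp Require Import sesquilinear.
From mathcomp Require Import complex.
From mathcomp Require Import all_classical all_reals.
From mathcomp Require Import ereal.
Set Implicit Arguments. Unset Strict Implicit. Unset Printing Implicit Defensive.
Import Order.TTheory GRing.Theory Num.Theory.
Local Open Scope ring_scope.
Local Open Scope sesquilinear_scope.
Local Open Scope classical_set_scope.

(* inner product <u, v> on C^d (antilinear in the first argument) *)
Definition inprod {R : rcfType} (d : nat) (u v : 'cV[R[i]]_d) : R[i] :=
  (u ^t* *m v) 0 0.

Definition in_ker {R : rcfType} (d : nat) (H : 'M[R[i]]_d) (psi : 'cV[R[i]]_d) : Prop :=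
  H *m psi = 0.

Definition in_ker_perp {R : rcfType} (d : nat) (H : 'M[R[i]]_d) (psi : 'cV[R[i]]_d) : Prop :=
  forall phi, in_ker H phi -> inprod phi psi = 0.

Definition orth_proj {R : rcfType} (d : nat) (P : 'M[R[i]]_d) : Prop :=
  P ^t* = P /\ P *m P = P.

(* gap(H) = inf { <psi, H psi> : psi in (ker H)^perp, ||psi|| = 1 }, taken in the
   extended reals (inf of the empty set is +oo).  For self-adjoint H the number
   <psi, H psi> is real; we take its real part. *)
Definition gap {R : realType} (d : nat) (H : 'M[R[i]]_d) : \bar R :=
  ereal_inf [set ((complex.Re (inprod psi (H *m psi)))%:E) | psi in
     [set psi : 'cV[R[i]]_d | in_ker_perp H psi /\ inprod psi psi = 1]].

(* cyclic indexing: cyc P i = P_(i mod L) *)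
Definition cyc {T : nmodType} (L : nat) (P : 'I_L -> T) (i : nat) : T :=
  \sum_(j < L | nat_of_ord j == (i %% L)%N) P j.

(* H_{n,k} = sum_{i=k}^{n+k-1} P_i (indices 0-based, cyclic) *)
Definition Hnk {T : nmodType} (L : nat) (P : 'I_L -> T) (n k : nat) : T :=
  \sum_(m < n) cyc P (k + m).

(* Main.v *)
Require Import Defs.
From HB Require Import structures.
From mathcomp Require Import all_boot all_order all_algebra.
From mathcomp Require Import sesquilinear complex.
From mathcomp Require Import all_classical all_reals ereal.
From mathcomp Require Import spectral zify ring lra.
Import Order.TTheory GRing.Theory Num.Theory.
Set Implicit Arguments. Unset Strict Implicit. Unset Printing Implicit Defensive.
Local Open Scope ring_scope.
Local Open Scope sesquilinear_scope.
Section QF.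
Variable R : rcfType.
Local Notation C := R[i].

Definition qf d (v : 'cV[C]_d) (A : 'M[C]_d) : C := (v^t* *m A *m v) 0 0.

Lemma qfD d (v : 'cV[C]_d) A B : qf v (A + B) = qf v A + qf v B.
Proof. by rewrite /qf mulmxDr mulmxDl mxE. Qed.

Lemma qf0 d (v : 'cV[C]_d) : qf v 0 = 0.
Proof. by rewrite /qf mulmx0 mul0mx mxE. Qed.

Lemma qfZ d (v : 'cV[C]_d) c A : qf v (c *: A) = c * qf v A.
Proof. by rewrite /qf -scalemxAr -scalemxAl mxE. Qed.

Lemma qf_sum d (v : 'cV[C]_d) (I : finType) (p : pred I) (F : I -> 'M_d) :
  qf v (\sum_(i | p i) F i) = \sum_(i | p i) qf v (F i).
Proof.
elim/big_rec2: _ => [|i y1 y2 _ <-]; first by rewrite qf0.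
by rewrite qfD.
Qed.

Lemma qfMn d (v : 'cV[C]_d) A k : qf v (A *+ k) = qf v A *+ k.
Proof. elim: k => [|k IH]; first by rewrite !mulr0n qf0. by rewrite !mulrS qfD IH. Qed.

Lemma tcM m n p (A : 'M[C]_(m, n)) (B : 'M[C]_(n, p)) : (A *m B)^t* = B^t* *m A^t*.
Proof. by rewrite trmx_mul map_mxM. Qed.

Lemma tcD m n (A B : 'M[C]_(m, n)) : (A + B)^t* = A^t* + B^t*.
Proof. by rewrite linearD /= map_mxD. Qed.

Lemma tc0 m n : (0 : 'M[C]_(m, n))^t* = 0.
Proof. by rewrite trmx0 map_mx0. Qed.

Lemma tc_sum d (I : finType) (p : pred I) (F : I -> 'M[C]_d) :
  (\sum_(i | p i) F i)^t* = \sum_(i | p i) (F i)^t*.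
Proof.
elim/big_rec2: _ => [|i y1 y2 _ <-]; first by rewrite tc0.
by rewrite tcD.
Qed.

Lemma norm2_ge0 d (w : 'cV[C]_d) : 0 <= (w^t* *m w) 0 0.
Proof.
rewrite mxE; apply: sumr_ge0 => i _; rewrite !mxE mulrC; exact: mul_conjC_ge0.
Qed.

Lemma qf_tc_ge0 d (v : 'cV[C]_d) (X : 'M[C]_d) : 0 <= qf v (X^t* *m X).
Proof. by rewrite /qf mulmxA -tcM -mulmxA; exact: norm2_ge0. Qed.

Lemma proj_tc d (P : 'M[C]_d) : orth_proj P -> P = P^t* *m P.
Proof. by case=> h1 h2; rewrite h1 h2. Qed.

Lemma qf_proj_ge0 d (v : 'cV[C]_d) P : orth_proj P -> 0 <= qf v P.
Proof. by move/proj_tc => ->; exact: qf_tc_ge0. Qed.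

Lemma qf_comm_ge0 d (v : 'cV[C]_d) P Q : orth_proj P -> orth_proj Q ->
  P *m Q = Q *m P -> 0 <= qf v (P *m Q).
Proof.
move=> [hP1 hP2] [hQ1 hQ2] hc.
have -> : P *m Q = (Q *m P)^t* *m (Q *m P).
  rewrite tcM hP1 hQ1 -mulmxA (mulmxA Q Q) hQ2 -hc mulmxA hP2 //.
exact: qf_tc_ge0.
Qed.

End QF.

Section Spec.
Variable R : realType.
Local Notation C := R[i].
Variables (d : nat) (H : 'M[C]_d).
Hypothesis hH : H^t* = H.
Hypothesis hpsd : forall v, 0 <= qf v H.

Let U := spectralmx H.
Let D := spectral_diag H.

Lemma UU : U *m U^t* = 1%:M.
Proof. exact/unitarymxP/spectral_unitarymx. Qed.
Lemma UtU : U^t* *m U = 1%:M.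
Proof. exact/mulmx1C/UU. Qed.

Lemma Hdec : H = U^t* *m diag_mx D *m U.
Proof.
have hn : H \is normalmx by apply/normalmxP; rewrite hH.
have := orthomx_spectralP hn.
by rewrite invmx_unitary ?spectral_unitarymx.
Qed.

Lemma H2dec : H *m H = U^t* *m diag_mx (\row_j (D 0 j * D 0 j)) *m U.
Proof.
rewrite Hdec -!mulmxA (mulmxA U) UU mul1mx (mulmxA (diag_mx D)) mulmx_diag.
by [].
Qed.

Lemma qf_diag (E : 'rV[C]_d) v :
  qf v (U^t* *m diag_mx E *m U) =
  \sum_i E 0 i * (((U *m v) i 0)^* * (U *m v) i 0).
Proof.
rewrite /qf -!mulmxA mulmxA -tcM mulmxA mul_mx_diag mxE.
apply: eq_bigr => i _; rewrite !mxE; ring.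
Qed.

Definition ev (i : 'I_d) : 'cV[C]_d := U^t* *m delta_mx i 0.

Lemma U_ev i : U *m ev i = delta_mx i 0.
Proof. by rewrite /ev mulmxA UU mul1mx. Qed.

Lemma qf_diag_ev (E : 'rV[C]_d) i :
  qf (ev i) (U^t* *m diag_mx E *m U) = E 0 i.
Proof.
rewrite qf_diag U_ev (bigD1 i) //= big1 ?addr0.
  by rewrite !mxE !eqxx /= conjC1 !mulr1.
by move=> j /negbTE ji; rewrite !mxE ji /= conjC0 !mul0r mulr0.
Qed.

Lemma D_ge0 i : 0 <= D 0 i.
Proof. by rewrite -(qf_diag_ev D i) -Hdec. Qed.

Lemma H_ev i : H *m ev i = D 0 i *: ev i.
Proof.
rewrite {1}Hdec -!mulmxA U_ev mul_diag_mx /ev scalemxAr; congr (_ *m _).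
apply/matrixP => a b; rewrite !mxE.
by case: eqP => [->|]; rewrite ?mulr0.
Qed.

Lemma ev_unit i : inprod (ev i) (ev i) = 1.
Proof.
rewrite /inprod /ev tcM trmxCK mulmxA -(mulmxA _ U) UU mulmx1.
rewrite mxE (bigD1 i) //= big1 ?addr0; first by rewrite !mxE !eqxx /= conjC1 mulr1.
by move=> j /negbTE ji; rewrite !mxE ji /= conjC0 mul0r.
Qed.

Lemma ev_perp i : D 0 i != 0 -> in_ker_perp H (ev i).
Proof.
move=> Dn0 phi; rewrite /in_ker /inprod => hphi.
have -> : ev i = (D 0 i)^-1 *: (H *m ev i) by rewrite H_ev scalerA mulVf // scale1r.
rewrite -scalemxAr mulmxA.
have -> : phi^t* *m H = 0 by rewrite -{1}hH -tcM hphi tc0.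
by rewrite mul0mx scaler0 mxE.
Qed.

Lemma inprod_ev_w i psi : inprod (ev i) psi = (U *m psi) i 0.
Proof.
rewrite /inprod /ev tcM trmxCK.
rewrite -mulmxA mxE (bigD1 i) //= big1 ?addr0; first by rewrite !mxE !eqxx /= conjC1 mul1r.
by move=> j /negbTE ji; rewrite !mxE ji /= conjC0 mul0r.
Qed.


Definition nw (v : 'cV[C]_d) i := ((U *m v) i 0)^* * (U *m v) i 0.

Lemma nw_ge0 v i : 0 <= nw v i.
Proof. by rewrite /nw mulrC; exact: mul_conjC_ge0. Qed.

Lemma qfH v : qf v H = \sum_i D 0 i * nw v i.
Proof. by rewrite {1}Hdec qf_diag. Qed.

Lemma qfH2 v : qf v (H *m H) = \sum_i (D 0 i * D 0 i) * nw v i.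
Proof. by rewrite H2dec qf_diag; apply: eq_bigr => i _; rewrite mxE. Qed.

Lemma gap_le_D i : D 0 i != 0 -> (gap H <= (complex.Re (D 0 i))%:E)%E.
Proof.
move=> Dn0; rewrite /gap; apply: ereal_inf_lbound.
exists (ev i); first by split; [exact: ev_perp | exact: ev_unit].
by rewrite /inprod H_ev -scalemxAr mxE -/(inprod _ _) ev_unit mulr1.
Qed.

Lemma L2 (g : R) : (g%:E <= gap H)%E -> forall v, (g%:C)%C * qf v H <= qf v (H *m H).
Proof.
move=> hg v; rewrite qfH qfH2 mulr_sumr; apply: ler_sum => i _.
have hn := nw_ge0 v i; have hD := D_ge0 i.
have [->|Dn0] := eqVneq (D 0 i) 0; first by rewrite !mul0r mulr0.
have : g <= complex.Re (D 0 i) by rewrite -lee_fin; exact: le_trans hg (gap_le_D Dn0).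
rewrite -lecR RRe_real ?ger0_real // => hgD.
rewrite mulrA; apply: ler_wpM2r => //; exact: ler_wpM2r.
Qed.

Lemma sum_nw psi : \sum_i nw psi i = inprod psi psi.
Proof.
have -> : inprod psi psi = ((U *m psi)^t* *m (U *m psi)) 0 0.
  by rewrite /inprod tcM mulmxA -(mulmxA _ (U^t*) U) UtU mulmx1.
by rewrite mxE; apply: eq_bigr => i _; rewrite /nw !mxE.
Qed.

Lemma L1 (c : R) : (forall v, (c%:C)%C * qf v H <= qf v (H *m H)) ->
  forall psi, in_ker_perp H psi -> inprod psi psi = 1 ->
  c <= complex.Re (inprod psi (H *m psi)).
Proof.
move=> hc psi hperp hnorm.
have : (c%:C)%C <= qf psi H.
  rewrite qfH -[X in X <= _]mulr1 -hnorm -sum_nw mulr_sumr.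
  apply: ler_sum => i _.
  have [D0|Dn0] := eqVneq (D 0 i) 0.
    have w0 : (U *m psi) i 0 = 0.
      by rewrite -inprod_ev_w; apply: hperp; rewrite /in_ker H_ev D0 scale0r.
    by rewrite /nw w0 !mulr0.
  apply: ler_wpM2r; first exact: nw_ge0.
  have := hc (ev i); rewrite {1}Hdec H2dec !qf_diag_ev mxE => h.
  have Dpos : 0 < D 0 i by rewrite lt_def Dn0 D_ge0.
  by rewrite -(ler_pM2r Dpos).
rewrite /qf -mulmxA -/(inprod _ _) lecE => /andP[_].
by [].
Qed.

End Spec.

Lemma modP (L x : nat) : (0 < L)%N -> (x < L + L)%N ->
  ((x < L)%N /\ (x %% L)%N = x) \/ ((L <= x)%N /\ (x %% L)%N = (x - L)%N).
Proof. move=> *; case: (ltnP x L) => *. by left; rewrite modn_small.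
right; split => //. have -> : x = (x - L + L)%N by lia. rewrite modnDr modn_small; lia. Qed.

Section Comb.
Variables (L n : nat).
Hypothesis hn1 : (1 < n)%N.
Hypothesis hnL : (n < L)%N.
Let L0 : (0 < L)%N. Proof. lia. Qed.

Definition mkI (x : nat) : 'I_L := Ordinal (ltn_pmod x L0).
Definition pos (k x : nat) : nat := if (k <= x)%N then (x - k)%N else (x + L - k)%N.
Definition S (k : 'I_L) := [set x : 'I_L | (pos k x < n)%N].
Definition T (a : 'I_L) := [set k : 'I_L | (pos k a < n)%N].

Lemma posP (k x : 'I_L) : ((k <= x)%N /\ pos k x = (x - k)%N) \/ ((x < k)%N /\ pos k x = (x + L - k)%N).
Proof. rewrite /pos; case: leqP => *; [left|right]; split => //. Qed.

Lemma mkIP x : (x < L + L)%N -> ((x < L)%N /\ (mkI x : nat) = x) \/ ((L <= x)%N /\ (mkI x : nat) = (x - L)%N).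
Proof. exact: modP. Qed.

Lemma S_imset k : S k = [set mkI (k + m) | m : 'I_n].
Proof.
apply/setP => x; rewrite inE; apply/idP/imsetP.
  move=> hx; exists (Ordinal hx) => //; apply/val_inj => /=.
  have := ltn_ord k; have := ltn_ord x; have := posP k x => *.
  have := @mkIP (k + pos k x) ltac:(lia); rewrite /= => *; lia.
case=> m _ ->.
have := ltn_ord k; have := ltn_ord m => *.
have := @mkIP (k + m) ltac:(lia); have := posP k (mkI (k + m)); have := ltn_ord (mkI (k+m)).
move=> *; lia.
Qed.

Lemma S_inj (k : 'I_L) : injective (fun m : 'I_n => mkI (k + m)).
Proof.
move=> m1 m2 /(congr1 (@nat_of_ord L)) => h; apply/val_inj => /=; move: h.
have := ltn_ord k; have := ltn_ord m1; have := ltn_ord m2 => *.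
have := @mkIP (k + m1) ltac:(lia); have := @mkIP (k + m2) ltac:(lia).
move=> *; lia.
Qed.


Lemma T_imset a : T a = [set mkI (a + L - m) | m : 'I_n].
Proof.
apply/setP => k; rewrite inE; apply/idP/imsetP.
  move=> hk; exists (Ordinal hk) => //; apply/val_inj => /=.
  have := ltn_ord a; have := ltn_ord k; have := posP k a => *.
  have := @mkIP (a + L - pos k a) ltac:(lia); rewrite /= => *; lia.
case=> m _ ->.
have := ltn_ord a; have := ltn_ord m => *.
have := @mkIP (a + L - m) ltac:(lia); have := posP (mkI (a + L - m)) a.
move=> *; lia.
Qed.

Lemma T_inj (a : 'I_L) : injective (fun m : 'I_n => mkI (a + L - m)).
Proof.
move=> m1 m2 /(congr1 (@nat_of_ord L)) => h; apply/val_inj => /=; move: h.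
have := ltn_ord a; have := ltn_ord m1; have := ltn_ord m2 => *.
have := @mkIP (a + L - m1) ltac:(lia); have := @mkIP (a + L - m2) ltac:(lia).
move=> *; lia.
Qed.

Lemma card_T a : #|T a| = n.
Proof. by rewrite T_imset card_imset ?cardsT ?card_ord //; exact: T_inj. Qed.

Lemma card_TI_lt (a b : 'I_L) : a != b -> (#|T a :&: T b| < n)%N.
Proof.
move=> ab; rewrite -(card_T a); apply: proper_card; apply/properP; split; first exact: subsetIl.
have hab : (a : nat) <> b by move=> h; move/eqP: ab; apply; apply: val_inj.
have := ltn_ord a; have := ltn_ord b; have := posP a b => *.
case: (ltnP (pos a b + n) L) => h.
  exists (mkI (a + L - n.-1)); rewrite !inE.
    have := @mkIP (a + L - n.-1) ltac:(lia); have := posP (mkI (a + L - n.-1)) a; move=> *; lia.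
  have := @mkIP (a + L - n.-1) ltac:(lia); have := posP (mkI (a + L - n.-1)) a;
  have := posP (mkI (a + L - n.-1)) b; move=> *; lia.
exists (mkI (b + 1)); rewrite !inE.
  have := @mkIP (b + 1) ltac:(lia); have := posP (mkI (b + 1)) a; move=> *; lia.
have := @mkIP (b + 1) ltac:(lia); have := posP (mkI (b + 1)) a;
have := posP (mkI (b + 1)) b; move=> *; lia.
Qed.


Lemma card_TI_adj (a b : 'I_L) :
  [|| (a.+1 == b :> nat), (b.+1 == a :> nat),
         ((a == 0 :> nat) && (b == L.-1 :> nat)) |
         ((b == 0 :> nat) && (a == L.-1 :> nat))] ->
  #|T a :&: T b| = n.-1.
Proof.
move=> hadj.
have ha := ltn_ord a; have hb := ltn_ord b.
have [k0 [hk0 hk0']] : exists k0, k0 \in T a /\ T a :&: T b = T a :\ k0.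
  case/or4P: hadj => [/eqP h|/eqP h|/andP[/eqP h1 /eqP h2]|/andP[/eqP h1 /eqP h2]].
  - exists (mkI (a + L - n.-1)); rewrite !inE; split.
      have := @mkIP (a + L - n.-1) ltac:(lia); have := posP (mkI (a + L - n.-1)) a; move=> *; lia.
    apply/setP => k; rewrite !inE -val_eqE /=.
    have := ltn_ord k; have := posP k a; have := posP k b => *.
    have := @mkIP (a + L - n.-1) ltac:(lia); rewrite /= => *.
    apply/idP/idP.
      by move=> /andP[h3 h4]; apply/andP; split; lia.
    by move=> /andP[h3 h4]; apply/andP; split; lia.
  - exists a; rewrite !inE; split.
      have := posP a a; move=> *; lia.
    apply/setP => k; rewrite !inE -val_eqE /=.
    have := ltn_ord k; have := posP k a; have := posP k b => *.
    apply/idP/idP.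
      by move=> /andP[h3 h4]; apply/andP; split; lia.
    by move=> /andP[h3 h4]; apply/andP; split; lia.
  - exists a; rewrite !inE; split.
      have := posP a a; move=> *; lia.
    apply/setP => k; rewrite !inE -val_eqE /=.
    have := ltn_ord k; have := posP k a; have := posP k b => *.
    apply/idP/idP.
      by move=> /andP[h3 h4]; apply/andP; split; lia.
    by move=> /andP[h3 h4]; apply/andP; split; lia.
  - exists (mkI (a + L - n.-1)); rewrite !inE; split.
      have := @mkIP (a + L - n.-1) ltac:(lia); have := posP (mkI (a + L - n.-1)) a; move=> *; lia.
    apply/setP => k; rewrite !inE -val_eqE /=.
    have := ltn_ord k; have := posP k a; have := posP k b => *.
    have := @mkIP (a + L - n.-1) ltac:(lia); rewrite /= => *.
    apply/idP/idP.
      by move=> /andP[h3 h4]; apply/andP; split; lia.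
    by move=> /andP[h3 h4]; apply/andP; split; lia.
rewrite hk0'; have := cardsD1 k0 (T a); rewrite hk0 card_T; lia.
Qed.

End Comb.

Section Main.
Variable R : realType.
Local Notation C := R[i].
Variables (d L n : nat) (P : 'I_L -> 'M[C]_d).
Hypothesis hP : forall j, orth_proj (P j).
Hypothesis hcomm : forall a b : 'I_L, P a *m P b != P b *m P a ->
     [|| (a.+1 == b :> nat), (b.+1 == a :> nat),
         ((a == 0 :> nat) && (b == L.-1 :> nat)) |
         ((b == 0 :> nat) && (a == L.-1 :> nat))].
Hypothesis hn1 : (1 < n)%N.
Hypothesis hnL : (n < L)%N.

Lemma cycE i : cyc P i = P (mkI hn1 hnL i).
Proof.
by rewrite /cyc (big_pred1 (mkI hn1 hnL i)) // => j /=.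
Qed.

Lemma Hnk_S (k : 'I_L) : Hnk P n k = \sum_(x in S n k) P x.
Proof.
rewrite /Hnk (S_imset hn1) big_imset /=; last by move=> ? ? _ _; exact: S_inj.
by apply: eq_bigr => m _; rewrite cycE.
Qed.

Lemma qf_sq v (I : finType) (p : pred I) (F : I -> 'M[C]_d) :
  qf v ((\sum_(i | p i) F i) *m (\sum_(j | p j) F j)) =
  \sum_(i | p i) \sum_(j | p j) qf v (F i *m F j).
Proof.
rewrite mulmx_suml qf_sum; apply: eq_bigr => i _.
by rewrite mulmx_sumr qf_sum.
Qed.

Lemma sum_Hk_qf2 v : \sum_(k < L) qf v (Hnk P n k *m Hnk P n k) =
  \sum_(a < L) \sum_(b < L) qf v (P a *m P b) *+ #|T n a :&: T n b|.
Proof.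
under eq_bigr => k _ do rewrite Hnk_S qf_sq.
transitivity (\sum_(k < L) \sum_(a < L) \sum_(b < L)
   (if k \in T n a :&: T n b then qf v (P a *m P b) else 0)).
  apply: eq_bigr => k _; rewrite big_mkcond; apply: eq_bigr => a _.
  case: ifP => ha; rewrite inE in ha.
    rewrite big_mkcond; apply: eq_bigr => b _; rewrite !inE ha /=.
    by [].
  by rewrite big1 // => b _; rewrite !inE ha.
rewrite exchange_big; apply: eq_bigr => a _; rewrite exchange_big; apply: eq_bigr => b _.
by rewrite -big_mkcond sumr_const.
Qed.

Lemma sum_Hk v : \sum_(k < L) qf v (Hnk P n k) = (\sum_(a < L) qf v (P a)) *+ n.
Proof.
under eq_bigr => k _ do rewrite Hnk_S qf_sum.
transitivity (\sum_(k < L) \sum_(a < L) (if k \in T n a then qf v (P a) else 0)).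
  apply: eq_bigr => k _; rewrite big_mkcond; apply: eq_bigr => a _.
  by rewrite !inE.
rewrite exchange_big -sumrMnl; apply: eq_bigr => a _.
by rewrite -big_mkcond sumr_const card_T.
Qed.

Lemma Hk_herm (k : 'I_L) : (Hnk P n k)^t* = Hnk P n k.
Proof. by rewrite Hnk_S tc_sum; apply: eq_bigr => x _; case: (hP x). Qed.

Lemma Hk_psd (k : 'I_L) v : 0 <= qf v (Hnk P n k).
Proof. by rewrite Hnk_S qf_sum; apply: sumr_ge0 => x _; exact: qf_proj_ge0. Qed.

Lemma HL_herm : (\sum_(j < L) P j)^t* = \sum_(j < L) P j.
Proof. by rewrite tc_sum; apply: eq_bigr => x _; case: (hP x). Qed.

Lemma HL_psd v : 0 <= qf v (\sum_(j < L) P j).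
Proof. by rewrite qf_sum; apply: sumr_ge0 => x _; exact: qf_proj_ge0. Qed.

Lemma key v : \sum_(k < L) qf v (Hnk P n k *m Hnk P n k) <=
  qf v ((\sum_(j < L) P j) *m (\sum_(j < L) P j)) *+ n.-1 + qf v (\sum_(j < L) P j).
Proof.
rewrite sum_Hk_qf2 qf_sq qf_sum.
have -> : \sum_(a < L) qf v (P a) =
   \sum_(a < L) \sum_(b < L) (if a == b then qf v (P a *m P b) else 0).
  apply: eq_bigr => a _; rewrite (bigD1 a) //= eqxx big1 ?addr0.
    by case: (hP a) => _ ->.
  by move=> b; rewrite eq_sym => /negbTE ->.
rewrite -sumrMnl -big_split /=; apply: ler_sum => a _.
rewrite -sumrMnl -big_split /=; apply: ler_sum => b _.
case: eqVneq => [<-|ab].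
  rewrite finset.setIid (card_T hn1 hnL).
  by rewrite -[in X in X <= _](prednK (ltnW hn1)) mulrSr.
rewrite addr0.
case: (boolP (P a *m P b == P b *m P a)) => hc.
  rewrite -[_ *+ #|_|]mulr_natr -[_ *+ n.-1]mulr_natr; apply: ler_wpM2l; first exact: qf_comm_ge0 (hP a) (hP b) (eqP hc).
  rewrite ler_nat -ltnS prednK; [exact: card_TI_lt | lia].
by rewrite (card_TI_adj hn1 hnL (hcomm hc)).
Qed.


Lemma realC (z : C) : 0 <= z -> z = ((complex.Re z)%:C)%C.
Proof. by move=> hz; rewrite RRe_real ?ger0_real. Qed.

Lemma final_ineq (G : R) (hG : forall k : 'I_L, (G%:E <= gap (Hnk P n k))%E) v :
  ((((n%:R * G - 1) / (n%:R - 1))%:C)%C) * qf v (\sum_(j < L) P j) <=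
  qf v ((\sum_(j < L) P j) *m (\sum_(j < L) P j)).
Proof.
have h1 : \sum_(k < L) ((G%:C)%C * qf v (Hnk P n k)) <=
          \sum_(k < L) qf v (Hnk P n k *m Hnk P n k).
  apply: ler_sum => k _; have := L2 (Hk_herm k) (Hk_psd k) (hG k) v; done.
rewrite -mulr_sumr sum_Hk -qf_sum in h1.
have h2 := key v.
have q1 := HL_psd v.
have q2 : 0 <= qf v ((\sum_(j < L) P j) *m (\sum_(j < L) P j)).
  by rewrite -{1}HL_herm; exact: qf_tc_ge0.
have q3 : 0 <= \sum_(k < L) qf v (Hnk P n k *m Hnk P n k).
  apply: sumr_ge0 => k _; rewrite -{1}Hk_herm; exact: qf_tc_ge0.
move: h1 h2; rewrite (realC q1) (realC q2) (realC q3).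
move: (complex.Re _) (complex.Re _) (complex.Re _) => r3 r2 r1.
rewrite -!rmorphMn -!rmorphM -!rmorphD !lecR => h1 h2.
rewrite -[r1 *+ n]mulr_natr in h1; rewrite -[r3 *+ _]mulr_natr in h2.
rewrite -subn1 natrB ?(ltnW hn1) // in h2.
have hn : (2 : R) <= n%:R by rewrite (ler_nat R 2 n).
rewrite mulrAC ler_pdivrMr; last by rewrite subr_gt0; lra.
nra.
Qed.

End Main.

Close Scope sesquilinear_scope.
Unset Implicit Arguments.

Theorem theorem3p10 (R : realType) (d L n : nat) (P : 'I_L -> 'M[R[i]]_d)
  (hP : forall j, orth_proj (P j))
  (hcomm : forall a b : 'I_L, P a *m P b != P b *m P a ->
     [|| (a.+1 == b :> nat), (b.+1 == a :> nat),
         ((a == 0 :> nat) && (b == L.-1 :> nat)) |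
         ((b == 0 :> nat) && (a == L.-1 :> nat))])
  (hn1 : (1 < n)%N) (hnL : (n < L)%N)
  (hker : exists psi : 'cV[R[i]]_d, psi != 0 /\ (\sum_(j < L) P j) *m psi = 0) :
  ((n%:R / (n%:R - 1))%:E *
     (\big[Order.min/+oo%E]_(k < L) gap (Hnk P n k) - (n%:R^-1)%:E)
   <= gap (\sum_(j < L) P j))%E.
Proof.
have hm : forall k : 'I_L, (\big[Order.min/+oo%E]_(k < L) gap (Hnk P n k) <= gap (Hnk P n k))%E.
  by move=> k; exact: bigmin_le.
have hb : forall G : R, (forall k : 'I_L, (G%:E <= gap (Hnk P n k))%E) ->
   forall psi, in_ker_perp (\sum_(j < L) P j) psi -> inprod psi psi = 1 ->
   (n%:R * G - 1) / (n%:R - 1) <= complex.Re (inprod psi ((\sum_(j < L) P j) *m psi)).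
  move=> G hG psi hperp hunit.
  have := L1 (HL_herm hP) (HL_psd hP) (final_ineq hP hcomm hn1 hnL hG) hperp hunit; done.
have hn : (2 : R) <= n%:R by rewrite (ler_nat R 2 n).
move: hm; case E : (\big[Order.min/+oo%E]_(k < L) gap (Hnk P n k)) => [r| |] hm.
- rewrite -EFinB -EFinM; apply/ereal_infP => _ [psi [hperp hunit] <-]; rewrite lee_fin.
  have := hb r hm psi hperp hunit.
  have -> : n%:R / (n%:R - 1) * (r - n%:R^-1) = (n%:R * r - 1) / (n%:R - 1) :> R.
    field; apply/andP; split; apply/negP => /eqP; lra.
  by [].
- have -> : gap (\sum_(j < L) P j) = +oo%E; last exact: leey.
  apply/eqP; rewrite eq_le leey /=; apply/ereal_infP => _ [psi [hperp hunit] <-].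
  exfalso.
  pose V := complex.Re (inprod psi ((\sum_(j < L) P j) *m psi)).
  pose G := ((V + 1) * (n%:R - 1) + 1) / n%:R.
  have := hb G (fun k => le_trans (leey _) (hm k)) psi hperp hunit.
  have -> : (n%:R * G - 1) / (n%:R - 1) = V + 1.
    rewrite /G; field; apply/andP; split; apply/negP => /eqP; lra.
  lra.
- rewrite (_ : (-oo + _)%E = -oo%E) // mulrNy gtr0_sg ?mul1e ?leNye //.
  apply: divr_gt0; lra.
Qed.
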